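(* Let $G$ be a finite simple graph, $r\geqslant 1$, let $\mathcal{C}$ be a minimal $r$-system of chorded cycles in $G$, and let $C\in\mathcal{C}$. Suppose $u$ is a vertex of $G$ not lying on any cycle of $\mathcal{C}$ with $d_C(u)\geqslant 3$. Then one of the following holds: (1) $|V(C)|=4$ and $d_C(u)\in\{3,4\}$; (2) $|V(C)|=5$, $d_C(u)=3$, and two of the vertices of $N_C(u)$ are both at distance $2$ on $C$ from the third vertex of $N_C(u)$; (3) $|V(C)|=6$, $d_C(u)=3$, and for every vertex $v$ not lying on any cycle of $\mathcal{C}$, the subgraph of $G$ induced by $V(C)\cup\{v\}$ is triangle-free.
   Context: A chorded cycle is a cycle together with an edge of the graph, not on the cycle, joining two vertices of the cycle. A minimal $r$-system of chorded cycles in $G$ is a collection of $r$ pairwise vertex-disjoint chorded cycles of $G$ whose total number of vertices is as small as possible among all such collections. $N_C(u)=N_G(u)\cap V(C)$ and $d_C(u)=|N_C(u)|$; distance on $C$ means distance in the cycle $C$ itself. *)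

(* Defs.v *)
From mathcomp Require Import all_boot.
Set Implicit Arguments. Unset Strict Implicit. Unset Printing Implicit Defensive.

Section Graphs.
Variable T : finType.
Variable adj : rel T.

Definition simple_graph : Prop := symmetric adj /\ irreflexive adj.

Definition is_cycle (c : seq T) : Prop :=
  2 < size c /\ uniq c /\ path.cycle adj c.

Definition cycle_edge (c : seq T) (x y : T) : bool :=
  (y == next c x) || (x == next c y).

Definition chorded_cycle (c : seq T) : Prop :=
  is_cycle c /\ exists x y, [/\ x \in c, y \in c, adj x y & ~~ cycle_edge c x y].

Definition r_system (r : nat) (S : seq (seq T)) : Prop :=
  [/\ size S = r, (forall c, c \in S -> chorded_cycle c)
    & pairwise (fun c d : seq T => [disjoint c & d]) S].

Definition total_vertices (S : seq (seq T)) : nat := sumn (map size S).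

Definition minimal_r_system (r : nat) (S : seq (seq T)) : Prop :=
  r_system r S /\
  forall S', r_system r S' -> total_vertices S <= total_vertices S'.

Definition nbhd_on (c : seq T) (u : T) : {set T} := [set x in c | adj u x].
Definition deg_on (c : seq T) (u : T) : nat := #|nbhd_on c u|.

Definition cycle_dist (c : seq T) (x y : T) : nat :=
  let i := index x c in let j := index y c in
  let d := if i <= j then j - i else i - j in
  minn d (size c - d).

Definition triangle_free_on (A : pred T) : Prop :=
  ~ exists a b d, [/\ a \in A, b \in A, d \in A & [&& adj a b, adj b d & adj a d]].

End Graphs.

(* Main.v *)
Require Import Defs.
From mathcomp Require Import all_boot.
From mathcomp Require Import zify.
Set Implicit Arguments. Unset Strict Implicit.

Section S.
Variable T : finType.
Variable adj : rel T.

Definition outside (S : seq (seq T)) (x : T) := forall D, D \in S -> x \notin D.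

Lemma replace r S C L : minimal_r_system adj r S -> C \in S -> chorded_cycle adj L ->
  (forall x, x \in L -> x \in C \/ outside S x) -> size C <= size L.
Proof.
move=> [[sz ch pw] mn] CS chL.
move: sz ch pw mn; case/splitPr: S / CS => s1 s2 sz ch pw mn sub.
move: (pw); rewrite !pairwise_cat !pairwise_cons => /and4P [a1 p1 a2 p2].
have dL : forall D, D \in s1 ++ s2 -> [disjoint L & D].
  move=> D DS; rewrite disjoint_has; apply/hasPn => x xL /=.
  case: (sub x xL) => [xC|]; last by apply; move: DS; rewrite !mem_cat in_cons => /orP [->|->]; rewrite ?orbT.
  move: DS; rewrite mem_cat => /orP [Ds1|Ds2].
  - have := allrelP a1 _ _ Ds1 (mem_head _ _).
    by rewrite disjoint_sym => h; rewrite (disjointFr h xC).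
  - by rewrite (disjointFr (allP a2 _ Ds2) xC).
have := mn (s1 ++ L :: s2).
rewrite /total_vertices !map_cat !sumn_cat /=.
suff: r_system adj r (s1 ++ L :: s2) by move=> h /(_ h); lia.
split.
- by rewrite -sz !size_cat.
- move=> c; rewrite mem_cat in_cons => /or3P [h|/eqP->|h].
  + by apply: ch; rewrite mem_cat h.
  + by [].
  + by apply: ch; rewrite mem_cat in_cons h !orbT.
rewrite !pairwise_cat !pairwise_cons.
apply/and4P; split => //.
- apply/allrelP => x y xs1; rewrite in_cons => /orP [/eqP->|ys2].
  + by rewrite disjoint_sym; apply: dL; rewrite mem_cat xs1.
  + by apply: (allrelP a1); rewrite // in_cons ys2 orbT.
- by apply/allP => y ys2; apply: dL; rewrite mem_cat ys2 orbT.
Qed.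

Hypothesis sg : simple_graph adj.
Lemma adjsym x y : adj x y = adj y x. Proof. by case: sg => s _; apply: s. Qed.
Lemma adjirr x : adj x x = false. Proof. by case: sg => _ i; apply: i. Qed.

Lemma cc_size4 L : chorded_cycle adj L -> 3 < size L.
Proof.
case=> [[s3 [un cy]] [x [y [xL yL a ce]]]].
case: L s3 un cy xL yL ce => [|a0 [|b0 [|c0 [|d0 L]]]] //= _.
rewrite !inE !negb_or => /and3P [/andP [ab ac] bc _] _.
rewrite /cycle_edge /next /=.
have ba : (b0 == a0) = false by rewrite eq_sym (negbTE ab).
have ca : (c0 == a0) = false by rewrite eq_sym (negbTE ac).
have cb : (c0 == b0) = false by rewrite eq_sym (negbTE bc).
rewrite ?eqxx ?ba ?ca ?cb /=.
move=> hx hy; move: a; case/or3P: hx => /eqP ->; case/or3P: hy => /eqP ->.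
all: by rewrite ?adjirr ?eqxx ?ba ?ca ?cb ?orbT //= ?eqxx ?andbF.
Qed.

Lemma cc4 a b c d : uniq [:: a; b; c; d] -> adj a b -> adj b c -> adj c d -> adj d a ->
  adj b d -> chorded_cycle adj [:: a; b; c; d].
Proof.
move=> un ab bc cd da bd; split; first by split => //; split => //=; rewrite ab bc cd da.
exists b, d; split; rewrite ?inE ?eqxx ?orbT //.
move: un; rewrite /= !inE !negb_or => /and4P [/and3P [nab nac nad] /andP [nbc nbd] ncd _].
rewrite /cycle_edge /next /= !eqxx.
rewrite (eq_sym b a) (negbTE nab) (eq_sym d a) (negbTE nad) (eq_sym d b) (negbTE nbd).
rewrite (eq_sym d c) (negbTE ncd) /=.
by rewrite eq_sym.
Qed.

Lemma cc5 a b c d e : uniq [:: a; b; c; d; e] -> adj a b -> adj b c -> adj c d -> adj d e ->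
  adj e a -> adj b d -> chorded_cycle adj [:: a; b; c; d; e].
Proof.
move=> un ab bc cd de ea bd; split; first by split => //; split => //=; rewrite ab bc cd de ea.
exists b, d; split; rewrite ?inE ?eqxx ?orbT //.
move: un; rewrite /= !inE !negb_or => /and5P [/and4P [nab nac nad nae] /and3P [nbc nbd nbe] /andP [ncd nce] nde _].
rewrite /cycle_edge /next /= !eqxx.
rewrite (eq_sym b a) (negbTE nab) (eq_sym d a) (negbTE nad) (eq_sym d b) (negbTE nbd).
rewrite (eq_sym d c) (negbTE ncd) /=.
by [].
Qed.

Lemma nth_rot' (x0 : T) (s : seq T) i t : i <= size s -> t < size s ->
  nth x0 (rot i s) t = nth x0 s ((t + i) %% size s).
Proof.
move=> isz tsz; rewrite /rot nth_cat size_drop.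
case: ltnP => h.
  by rewrite nth_drop modn_small 1?addnC //; lia.
rewrite nth_take; last by lia.
have -> : t + i = (t - (size s - i)) + size s by lia.
by rewrite modnDr modn_small //; lia.
Qed.


Lemma arc C u j k : uniq C -> path.cycle adj C -> u \notin C -> 0 < j < k -> k < size C ->
  adj u (nth u C 0) -> adj u (nth u C j) -> adj u (nth u C k) ->
  chorded_cycle adj (u :: take k.+1 C).
Proof.
move=> un cy uC /andP [j0 jk] ksz a0 aj ak.
have jsz : j < size C by lia.
have szt : size (take k.+1 C) = k.+1 by rewrite size_take; case: ifP; lia.
split; first split.
- by rewrite /= szt; lia.
- split.
  + rewrite /= take_uniq // andbT; apply/negP => /mem_take; exact/negP.
  + rewrite /= rcons_path; apply/andP; split; last by rewrite (take_nth u) // last_rcons adjsym.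
    case: C un cy uC jsz ksz a0 aj ak {szt} => [|c0 C'] //= _.
    rewrite rcons_path => /andP [p _] _ _ _ -> _ _ /=.
    by rewrite take_path.
set t := take k.+1 C.
have yt : nth u t j = nth u C j by rewrite nth_take //; lia.
have yu : (nth u C j == u) = false by apply/negP => /eqP h; move: uC; rewrite -h mem_nth.
have ytin : nth u C j \in t by rewrite -yt mem_nth // szt; lia.
exists u, (nth u C j); split.
- by rewrite mem_head.
- by rewrite in_cons ytin orbT.
- by [].
rewrite /cycle_edge !next_nth mem_head in_cons ytin orbT /= eqxx (eq_sym u (nth u C j)) yu.
rewrite -{2}yt index_uniq ?szt ?take_uniq //; last by lia.
rewrite !nth_take; [|lia|lia].
rewrite nth_uniq //; [|lia].
rewrite negb_or; apply/andP; split; first by lia.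
by apply/negP => /eqP h; move: uC; rewrite h mem_nth //; lia.
Qed.

Definition dmod n i j := (j + n - i) %% n.
Definition good n (N : nat -> bool) :=
  all (fun i => all (fun j => all (fun k =>
    ~~ [&& N i, N j, N k, 0 < dmod n i j, dmod n i j < dmod n i k & dmod n i k + 2 < n])
    (iota 0 n)) (iota 0 n)) (iota 0 n).

Lemma dmodK n i j : i < n -> j < n -> (dmod n i j + i) %% n = j.
Proof.
move=> ilt jlt; rewrite /dmod modnDml.
have -> : j + n - i + i = j + n by lia.
by rewrite modnDr modn_small.
Qed.

Lemma dmod_lt n i j : 0 < n -> dmod n i j < n.
Proof. by move=> n0; rewrite /dmod ltn_mod. Qed.

Lemma good_of C u (P : T -> Prop) : uniq C -> path.cycle adj C -> u \notin C -> P u ->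
  (forall L, chorded_cycle adj L -> (forall x, x \in L -> x \in C \/ P x) -> size C <= size L) ->
  good (size C) (fun t => adj u (nth u C t)).
Proof.
move=> un cy uC Pu Hmin.
apply/allP => i; rewrite mem_iota => /andP [_ ilt].
apply/allP => j; rewrite mem_iota => /andP [_ jlt].
apply/allP => k; rewrite mem_iota => /andP [_ klt].
apply/negP => /andP [Ni /and5P [Nj Nk j0 jk kn]].
set n := size C in ilt jlt klt jk kn j0 *.
have n0 : 0 < n by lia.
have ile : i <= size C by rewrite -/n; lia.
have H := @arc (rot i C) u (dmod n i j) (dmod n i k) (etrans (rot_uniq i C) un) (etrans (rot_cycle i adj C) cy).
have uC' : u \notin rot i C by rewrite mem_rot.
have szr : size (rot i C) = n by rewrite size_rot.
have := H uC'; rewrite j0 jk szr dmod_lt // => /(_ isT isT).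
rewrite !nth_rot' ?dmod_lt // -/n ?dmodK // add0n modn_small // => /(_ Ni Nj Nk) ch.
have := Hmin _ ch; rewrite /= size_take szr -/n.
have -> : (dmod n i k).+1 < n by lia.
have : ~ (n <= (dmod n i k).+2) by lia.
move=> h1 h2; apply: h1; apply: h2 => x; rewrite in_cons => /orP [/eqP ->|xt]; first by right.
by left; rewrite -(mem_rot i); apply: mem_take xt.
Qed.

Lemma dmod_ge n i j : i <= j -> j < n -> dmod n i j = j - i.
Proof.
move=> ij jn; rewrite /dmod.
have -> : j + n - i = j - i + n by lia.
by rewrite modnDr modn_small //; lia.
Qed.

Lemma dmod_lt' n i j : j < i -> i < n -> dmod n i j = j + n - i.
Proof. by move=> ji jn; rewrite /dmod modn_small //; lia. Qed.

Lemma good_use n N i j k : good n N -> i < n -> j < n -> k < n -> N i -> N j -> N k ->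
  0 < dmod n i j -> dmod n i j < dmod n i k -> n <= dmod n i k + 2.
Proof.
move=> g il jl kl Ni Nj Nk h1 h2.
have := allP (allP (allP g i _) j _) k; rewrite !mem_iota /= il jl kl => /(_ isT isT isT).
by rewrite Ni Nj Nk h1 h2 /= -leqNgt.
Qed.

Lemma good_bound n N : good n N -> 3 <= count N (iota 0 n) -> n <= 6.
Proof.
move=> g c3.
set P := filter N (iota 0 n).
have szP : 3 <= size P by rewrite size_filter.
have so : sorted ltn P by apply: sorted_filter; [exact: ltn_trans|exact: iota_ltn_sorted].
have lt := sorted_ltn_nth ltn_trans 0 so.
have inP m : m < 3 -> nth 0 P m \in P.
 move=> h; apply: mem_nth; exact: (leq_trans h szP).
have prop m : m < 3 -> N (nth 0 P m) && (nth 0 P m < n).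
  by move=> h; move: (inP m h); rewrite mem_filter mem_iota.
have ab : nth 0 P 0 < nth 0 P 1 by apply: lt; rewrite ?inE; lia.
have bc : nth 0 P 1 < nth 0 P 2 by apply: lt; rewrite ?inE; lia.
move: (prop 0 isT) (prop 1 isT) (prop 2 isT) ab bc.
set a := nth 0 P 0; set b := nth 0 P 1; set c := nth 0 P 2.
move=> /andP [Na an] /andP [Nb bn] /andP [Nc cn] ab bc.
have h1 := @good_use n N a b c g an bn cn Na Nb Nc.
rewrite !dmod_ge in h1; try lia.
have h2 := @good_use n N b c a g bn cn an Nb Nc Na.
rewrite dmod_ge ?dmod_lt' in h2; try lia.
have h3 := @good_use n N c a b g cn an bn Nc Na Nb.
rewrite !dmod_lt' in h3; try lia.
Qed.

Ltac uq := rewrite /= ?inE; repeat (apply/andP; split); rewrite ?negb_or;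
  repeat (apply/andP; split); try done; by rewrite eq_sym.
Ltac cct := first [done | by rewrite adjsym | uq].
Ltac hyp_sym := first [assumption | rewrite adjsym; assumption].
Ltac tri_close := solve [ match goal with
  | H : is_true (adj ?x ?x) |- _ => by rewrite adjirr in H
  | F : is_true (adj _ _) -> False |- _ => apply: F; hyp_sym
  | F : is_true (adj _ _) -> is_true (adj _ _) -> False |- _ => apply: F; hyp_sym
  | F : is_true (adj _ _) -> is_true (adj _ _) -> is_true (adj _ _) -> False |- _ =>
      apply: F; hyp_sym
  end ].
Ltac kill Hmin sub L :=
  have: 6 <= size L by (apply: Hmin; [ (apply: cc4 || apply: cc5); cct
                                     | apply: sub; by rewrite /= !inE !eqxx ?orbT ]);
  by [].
Ltac split_mem H := rewrite !inE in H; repeat (case/orP: H => H); move/eqP: H => H; subst.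

Lemma tri6 (c0 c1 c2 c3 c4 c5 u v : T) (P : T -> Prop) :
  uniq [:: c0; c1; c2; c3; c4; c5] -> path.cycle adj [:: c0; c1; c2; c3; c4; c5] ->
  u \notin [:: c0; c1; c2; c3; c4; c5] -> v \notin [:: c0; c1; c2; c3; c4; c5] -> P u -> P v ->
  adj u c0 -> adj u c2 -> adj u c4 -> ~~ adj u c1 -> ~~ adj u c3 -> ~~ adj u c5 ->
  (forall L, chorded_cycle adj L ->
     (forall x, x \in L -> x \in [:: c0; c1; c2; c3; c4; c5] \/ P x) -> 6 <= size L) ->
  triangle_free_on adj [predU [:: c0; c1; c2; c3; c4; c5] & pred1 v].
Proof.
set C0 := [:: c0; c1; c2; c3; c4; c5].
move=> un cy uC vC Pu Pv u0 u2 u4 u1 u3 u5 Hmin.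
have sub L : all (fun x => (x \in C0) || (x == u) || (x == v)) L ->
    forall x, x \in L -> x \in C0 \/ P x.
  move=> /allP h x /h /orP [/orP [->|/eqP ->]|/eqP ->]; by [left|right|right].
move: un; rewrite /= !inE !negb_or => /and5P [/and5P [n01 n02 n03 n04 n05]
  /and4P [n12 n13 n14 n15] /and3P [n23 n24 n25] /andP [n34 n35] /andP [n45 _]].
move: uC vC; rewrite !inE !negb_or => /andP [nu0 /and5P [nu1 nu2 nu3 nu4 nu5]]
  /andP [nv0 /and5P [nv1 nv2 nv3 nv4 nv5]].
move: cy => /= /and5P [e01 e12 e23 e34 /andP [e45 /andP [e50 _]]].
have F1 : adj c0 c2 -> False.
  by move=> h; kill Hmin sub [:: u; c0; c1; c2].
have F2 : adj c2 c4 -> False by move=> h; kill Hmin sub [:: u; c2; c3; c4].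
have F3 : adj c4 c0 -> False by move=> h; kill Hmin sub [:: u; c4; c5; c0].
have F4 : adj c1 c3 -> False by move=> h; kill Hmin sub [:: u; c2; c3; c1; c0].
have F5 : adj c3 c5 -> False by move=> h; kill Hmin sub [:: u; c4; c5; c3; c2].
have F6 : adj c5 c1 -> False by move=> h; kill Hmin sub [:: u; c0; c1; c5; c4].
have G3 : adj v c0 -> adj v c3 -> adj c0 c3 -> False.
  by move=> h1 h2 h3; kill Hmin sub [:: c2; c3; v; c0; c1].
have G4 : adj v c1 -> adj v c4 -> adj c1 c4 -> False.
  by move=> h1 h2 h3; kill Hmin sub [:: c3; c4; v; c1; c2].
have G5 : adj v c2 -> adj v c5 -> adj c2 c5 -> False.
  by move=> h1 h2 h3; kill Hmin sub [:: c4; c5; v; c2; c3].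
case: (v =P u) => [vu|/eqP nvu].
  subst v.
  have U1 : adj u c1 -> False by rewrite (negbTE u1).
  have U3 : adj u c3 -> False by rewrite (negbTE u3).
  have U5 : adj u c5 -> False by rewrite (negbTE u5).
  move=> [a [b [d [ha hb hd /and3P [h1 h2 h3]]]]].
  split_mem ha; split_mem hb; split_mem hd; tri_close.
have E1 : adj v c0 -> adj v c1 -> False by move=> h1 h2; kill Hmin sub [:: u; c0; v; c1; c2].
have E2 : adj v c1 -> adj v c2 -> False by move=> h1 h2; kill Hmin sub [:: u; c2; v; c1; c0].
have E3 : adj v c2 -> adj v c3 -> False by move=> h1 h2; kill Hmin sub [:: u; c2; v; c3; c4].
have E4 : adj v c3 -> adj v c4 -> False by move=> h1 h2; kill Hmin sub [:: u; c4; v; c3; c2].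
have E5 : adj v c4 -> adj v c5 -> False by move=> h1 h2; kill Hmin sub [:: u; c4; v; c5; c0].
have E6 : adj v c5 -> adj v c0 -> False by move=> h1 h2; kill Hmin sub [:: u; c0; v; c5; c4].
move=> [a [b [d [ha hb hd /and3P [h1 h2 h3]]]]].
split_mem ha; split_mem hb; split_mem hd; tri_close.
Qed.
End S.

Definition cdist n i k := let d := if i <= k then k - i else i - k in minn d (n - d).

Definition concl5 (N : nat -> bool) :=
  (count N (iota 0 5) == 3) && has (fun i => has (fun j => has (fun k =>
   [&& N i, N j, N k, i != j, i != k, j != k, cdist 5 i k == 2, cdist 5 j k == 2 &
       all (fun t => N t ==> [|| t == i, t == j | t == k]) (iota 0 5)])
   (iota 0 5)) (iota 0 5)) (iota 0 5).

Lemma brute5 N : good 5 N -> 3 <= count N (iota 0 5) -> concl5 N.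
Proof.
rewrite /good /concl5 /=.
case: (N 0); case: (N 1); case: (N 2); case: (N 3); case: (N 4); by vm_compute.
Qed.

Definition concl6 (N : nat -> bool) :=
  (count N (iota 0 6) == 3) &&
  ([&& N 0, ~~ N 1, N 2, ~~ N 3, N 4 & ~~ N 5] || [&& ~~ N 0, N 1, ~~ N 2, N 3, ~~ N 4 & N 5]).

Lemma brute6 N : good 6 N -> 3 <= count N (iota 0 6) -> concl6 N.
Proof.
rewrite /good /concl6 /=.
case: (N 0); case: (N 1); case: (N 2); case: (N 3); case: (N 4); case: (N 5); by vm_compute.
Qed.

Lemma deg_count (T : finType) (adj : rel T) C u : uniq C ->
  deg_on adj C u = count (fun t => adj u (nth u C t)) (iota 0 (size C)).
Proof.
move=> un; rewrite /deg_on /nbhd_on.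
have -> : [set x in C | adj u x] = [set x in filter (adj u) C].
  by apply/setP => x; rewrite !inE mem_filter andbC.
rewrite cardsE (card_uniqP _) ?filter_uniq // size_filter.
by rewrite -{1}(mkseq_nth u C) /mkseq count_map.
Qed.

Theorem lemma3p2 (T : finType) (adj : rel T) (r : nat) (S : seq (seq T))
  (C : seq T) (u : T) :
  simple_graph adj -> 1 <= r ->
  minimal_r_system adj r S -> C \in S ->
  (forall D, D \in S -> u \notin D) ->
  3 <= deg_on adj C u ->
  [\/ size C = 4 /\ (deg_on adj C u = 3 \/ deg_on adj C u = 4),
      [/\ size C = 5, deg_on adj C u = 3 &
          exists x y z, [/\ nbhd_on adj C u = [set x; y; z], [&& x != y, x != z & y != z],
                            cycle_dist C x z = 2 & cycle_dist C y z = 2]]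
    | [/\ size C = 6, deg_on adj C u = 3 &
          forall v, (forall D, D \in S -> v \notin D) ->
            triangle_free_on adj [predU C & pred1 v]]].
Proof.
move=> sg r1 Hmin CS uS d3.
have chC : chorded_cycle adj C by case: Hmin => [[_ h _] _]; apply: h.
have [[_ [un cy]] _] := chC.
have uC : u \notin C := uS C CS.
have Hm : forall L, chorded_cycle adj L -> (forall x, x \in L -> x \in C \/ @outside T S x) ->
    size C <= size L by move=> L; apply: (@replace T adj r S C L Hmin CS).
have g := good_of sg un cy uC uS Hm.
have dc := deg_count adj u un.
set N := fun t => adj u (nth u C t) in g dc.
have n6 := good_bound g (ltac:(by rewrite -dc)).
have n4 := cc_size4 sg chC.
have : (size C = 4) \/ (size C = 5) \/ (size C = 6).
  have n6' : size C <= 6 := n6; have n4' : 3 < size C := n4.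
  by move: n4' n6'; generalize (size C) => m; clear; lia.
case=> [e4|[e5|e6]].
- constructor 1; split => //.
  have := count_size N (iota 0 (size C)); rewrite size_iota -dc; lia.
- constructor 2; rewrite e5 in g dc.
  have := brute5 g; rewrite -dc => /(_ d3) /andP [/eqP c3].
  move=> /hasP [i]; rewrite mem_iota => /andP [_ il].
  move=> /hasP [j]; rewrite mem_iota => /andP [_ jl].
  move=> /hasP [k]; rewrite mem_iota => /andP [_ kl].
  move=> /andP [Ni /andP [Nj /andP [Nk /andP [ij /andP [ik /andP [jk /andP [dik /andP [djk hall]]]]]]]].
  split; [by []|by rewrite dc|]; exists (nth u C i), (nth u C j), (nth u C k); split.
  + apply/setP => x; rewrite /nbhd_on !inE; apply/idP/idP.
    * move=> /andP [xC ax].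
      have tl : index x C < 5 by rewrite -e5 index_mem.
      have := allP hall (index x C); rewrite mem_iota tl /N nth_index // ax => /(_ isT) /=.
      by move=> h; rewrite -(nth_index u xC) !nth_uniq ?e5 // -orbA.
    * by move=> /orP [/orP [] |] /eqP ->; rewrite mem_nth ?e5.
  + by rewrite !nth_uniq ?e5 // ij ik jk.
  + by rewrite /cycle_dist !index_uniq ?e5 //; apply/eqP.
  + by rewrite /cycle_dist !index_uniq ?e5 //; apply/eqP.
- constructor 3; rewrite e6 in g dc.
  have := brute6 g; rewrite -dc => /(_ d3) /andP [/eqP c3 cases].
  split; [by []|by rewrite dc|move=> v vS].
  have vC : v \notin C := vS C CS.
  have eC : C = [:: nth u C 0; nth u C 1; nth u C 2; nth u C 3; nth u C 4; nth u C 5].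
    by rewrite -{1}(mkseq_nth u C) e6.
  case/orP: cases => /andP [N0 /andP [N1 /andP [N2 /andP [N3 /andP [N4 N5]]]]].
  + have := @tri6 T adj sg (nth u C 0) (nth u C 1) (nth u C 2) (nth u C 3) (nth u C 4) (nth u C 5) u v (@outside T S).
    rewrite -eC => /(_ un cy uC vC uS vS N0 N2 N4 N1 N3 N5) T6.
    move=> [a [b [d [ha hb hd e]]]]; apply: T6.
    + move=> L h1 h2; rewrite -e6; apply: Hm h1 _; move=> x /h2 [h|h]; [left|by right].
      by move: h; rewrite -?eC.
    + by exists a, b, d; split => //; rewrite -eC.
  + have eR : rot 1 C = [:: nth u C 1; nth u C 2; nth u C 3; nth u C 4; nth u C 5; nth u C 0].
      by rewrite {1}eC.
    have := @tri6 T adj sg (nth u C 1) (nth u C 2) (nth u C 3) (nth u C 4) (nth u C 5) (nth u C 0) u v (@outside T S).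
    rewrite -eR rot_uniq rot_cycle !mem_rot.
    move=> /(_ un cy uC vC uS vS N1 N3 N5 N2 N4 N0) T6.
    move=> [a [b [d [ha hb hd e]]]]; apply: T6.
    + by move=> L h1 h2; rewrite -e6; apply: Hm h1 _; move=> x /h2; rewrite mem_rot.
    + have memR x : (x \in [predU rot 1 C & pred1 v]) = (x \in [predU C & pred1 v]) by rewrite !inE mem_rot.
      by exists a, b, d; rewrite !memR.
Qed.
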